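(* Let $L, M$ be complete lattices and $f:L\to M$ a complete lattice homomorphism (preserving arbitrary joins and meets). If a set filter $\mathcal{F}$ on $L$ star-converges to $x\in L$, then $f(\mathcal{F})$ star-converges to $f(x)$ in $M$.
   Context: A set filter on a set $P$ is a nonempty collection of subsets of $P$ not containing $\emptyset$, closed under finite intersections and under supersets; if $\mathcal{F}\subseteq\mathcal{G}$ are set filters, $\mathcal{G}$ is a super-filter of $\mathcal{F}$. For a subset $S$ of a poset, $S^u$ and $S^\ell$ denote the sets of upper and lower bounds of $S$. For a set filter $\mathcal{F}$ on a complete lattice $P$, put $\mathcal{F}^u=\bigcup\{F^u: F\in\mathcal{F}\}$, $\mathcal{F}^\ell=\bigcup\{F^\ell: F\in\mathcal{F}\}$; $\mathcal{F}$ order-converges to $x$, written $\mathcal{F}\to x$, if $\bigwedge\mathcal{F}^u=x=\bigvee\mathcal{F}^\ell$. $\mathcal{F}$ star-converges to $x$ if for every super-filter $\mathcal{F}'$ of $\mathcal{F}$ there is a super-filter $\mathcal{G}$ of $\mathcal{F}'$ with $\mathcal{G}\to x$. For a map $f:X\to Y$ and a set filter $\mathcal{F}$ on $X$, $f(\mathcal{F})$ is the set filter on $Y$ of all subsets of $Y$ containing $f(F)$ for some $F\in\mathcal{F}$. *)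

(* Defs.v *)
From Stdlib Require Import Classical.

Set Implicit Arguments.

Record CompleteLattice := {
  carrier :> Type;
  le : carrier -> carrier -> Prop;
  le_refl : forall x, le x x;
  le_trans : forall x y z, le x y -> le y z -> le x z;
  le_antisym : forall x y, le x y -> le y x -> x = y;
  sup : (carrier -> Prop) -> carrier;
  inf : (carrier -> Prop) -> carrier;
  sup_ub : forall S x, S x -> le x (sup S);
  sup_least : forall S y, (forall x, S x -> le x y) -> le (sup S) y;
  inf_lb : forall S x, S x -> le (inf S) x;
  inf_greatest : forall S y, (forall x, S x -> le y x) -> le y (inf S)
}.

Arguments le {c} _ _.
Arguments sup {c} _.
Arguments inf {c} _.

Definition image {X Y : Type} (f : X -> Y) (S : X -> Prop) : Y -> Prop :=
  fun y => exists x, S x /\ f x = y.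

Definition complete_hom (L M : CompleteLattice) (f : L -> M) : Prop :=
  (forall S : L -> Prop, f (sup S) = sup (image f S)) /\
  (forall S : L -> Prop, f (inf S) = inf (image f S)).

Definition set_filter {P : Type} (F : (P -> Prop) -> Prop) : Prop :=
  (exists A, F A) /\
  ~ F (fun _ => False) /\
  (forall A B, F A -> F B -> F (fun x => A x /\ B x)) /\
  (forall A B, F A -> (forall x, A x -> B x) -> F B).

Definition subfilter {P : Type} (F G : (P -> Prop) -> Prop) : Prop :=
  forall A, F A -> G A.

Definition ubounds {L : CompleteLattice} (S : L -> Prop) : L -> Prop :=
  fun y => forall x, S x -> le x y.
Definition lbounds {L : CompleteLattice} (S : L -> Prop) : L -> Prop :=
  fun y => forall x, S x -> le y x.

Definition filter_ub {L : CompleteLattice} (F : (L -> Prop) -> Prop) : L -> Prop :=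
  fun y => exists A, F A /\ ubounds A y.
Definition filter_lb {L : CompleteLattice} (F : (L -> Prop) -> Prop) : L -> Prop :=
  fun y => exists A, F A /\ lbounds A y.

Definition order_conv {L : CompleteLattice} (F : (L -> Prop) -> Prop) (x : L) : Prop :=
  inf (filter_ub F) = x /\ sup (filter_lb F) = x.

Definition star_conv {L : CompleteLattice} (F : (L -> Prop) -> Prop) (x : L) : Prop :=
  forall F', set_filter F' -> subfilter F F' ->
    exists G, set_filter G /\ subfilter F' G /\ order_conv G x.

Definition image_filter {X Y : Type} (f : X -> Y) (F : (X -> Prop) -> Prop)
  : (Y -> Prop) -> Prop :=
  fun B => exists A, F A /\ forall x, A x -> B (f x).

(* Main.v *)
Require Import Defs.

Lemma hom_mono (L M : CompleteLattice) (f : L -> M) (hf : complete_hom L M f) :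
  forall a b : L, le a b -> le (f a) (f b).
Proof.
  intros a b hab. destruct hf as [hs _].
  assert (E : sup (fun z => z = a \/ z = b) = b).
  { apply le_antisym.
    - apply sup_least. intros z [->| ->]; [exact hab| apply le_refl].
    - apply sup_ub. right; reflexivity. }
  rewrite <- E, hs. apply sup_ub. exists a. split; auto.
Qed.

Lemma image_filter_set (L M : CompleteLattice) (f : L -> M) (G : (L -> Prop) -> Prop) :
  set_filter G -> set_filter (image_filter f G).
Proof.
  intros [[A0 hA0] [hne [hI hS]]]. split; [|split; [|split]].
  - exists (fun y => exists a, A0 a /\ f a = y). exists A0. split; eauto.
  - intros [A [hA hAB]]. apply hne. apply (hS A); auto.
  - intros B1 B2 [A1 [h1 k1]] [A2 [h2 k2]]. exists (fun z => A1 z /\ A2 z).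
    split; [apply hI; auto|]. intros z [? ?]; auto.
  - intros B1 B2 [A1 [h1 k1]] hsub. exists A1. split; auto.
Qed.

Theorem mainTheorem4 (L M : CompleteLattice) (f : L -> M)
  (hf : complete_hom L M f)
  (F : (L -> Prop) -> Prop) (hF : set_filter F) (x : L) :
  star_conv F x -> star_conv (image_filter f F) (f x).
Proof.
  intros hstar F' hF' hsub.
  pose (H := fun C : L -> Prop => exists A B, F A /\ F' B /\
               forall z, A z -> B (f z) -> C z).
  destruct hF as [[A0 hA0] [hFne [hFI hFS]]].
  destruct hF' as [[B0 hB0] [hF'ne [hF'I hF'S]]].
  assert (imgF : forall A, F A -> F' (fun y => exists a, A a /\ f a = y)).
  { intros A hA. apply hsub. exists A. split; eauto. }
  assert (hH : set_filter H).
  { split; [|split; [|split]].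
    - exists (fun _ => True). exists A0, B0. auto.
    - intros [A [B [hA [hB hC]]]]. apply hF'ne.
      apply (hF'S (fun y => B y /\ exists a, A a /\ f a = y)).
      + apply hF'I; auto.
      + intros y [hy [a [ha <-]]]. exact (hC a ha hy).
    - intros C1 C2 [A1 [B1 [h1 [k1 c1]]]] [A2 [B2 [h2 [k2 c2]]]].
      exists (fun z => A1 z /\ A2 z), (fun y => B1 y /\ B2 y).
      split; [apply hFI; auto|]. split; [apply hF'I; auto|].
      intros z [? ?] [? ?]; auto.
    - intros C1 C2 [A1 [B1 [h1 [k1 c1]]]] hs.
      exists A1, B1. auto. }
  assert (hFH : subfilter F H).
  { intros A hA. exists A, B0. auto. }
  destruct (hstar H hH hFH) as [G [hG [hHG [hinf hsup]]]].
  exists (image_filter f G). split; [apply image_filter_set; auto|]. split.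
  - intros B hB. exists (fun z => B (f z)). split; auto.
    apply hHG. exists (fun _ => True), B. split; [apply (hFS A0); auto|]. auto.
  - destruct hG as [_ [hGne [_ hGS]]].
    destruct hf as [hs hi].
    split; apply le_antisym.
    + rewrite <- hinf, hi. apply inf_greatest. intros y [u [[A [hA hu]] <-]].
      apply inf_lb. exists (fun y => exists a, A a /\ f a = y). split.
      * exists A. split; eauto.
      * intros w [a [ha <-]]. apply hom_mono; [split; auto|]. apply hu; auto.
    + apply inf_greatest. intros y [B [[A [hA hAB]] hy]].
      apply le_trans with (f (sup A)).
      * apply hom_mono; [split; auto|]. rewrite <- hinf. apply inf_lb.
        exists A. split; auto. intros a ha. apply sup_ub; auto.
      * rewrite hs. apply sup_least. intros w [a [ha <-]]. apply hy, hAB, ha.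
    + apply sup_least. intros y [B [[A [hA hAB]] hy]].
      apply le_trans with (f (inf A)).
      * rewrite hi. apply inf_greatest. intros w [a [ha <-]]. apply hy, hAB, ha.
      * apply hom_mono; [split; auto|]. rewrite <- hsup. apply sup_ub.
        exists A. split; auto. intros a ha. apply inf_lb; auto.
    + rewrite <- hsup, hs. apply sup_least. intros y [u [[A [hA hu]] <-]].
      apply sup_ub. exists (fun y => exists a, A a /\ f a = y). split.
      * exists A. split; eauto.
      * intros w [a [ha <-]]. apply hom_mono; [split; auto|]. apply hu; auto.
Qed.
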